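(* Let $k$ be a positive integer and $m$ an integer with $1\leq m<k$. If integers $p_k,p_m$ satisfy $p_k>0$ and $p_m\geq p_k+\left\lfloor\frac{k}{m}\right\rfloor-1$, then there exists a connected graph $G$ such that $\psi_k(G)=p_k$ and $\psi_m(G)=p_m$.
   Context: All graphs are finite, simple and nonempty. For a graph $G$ and a positive integer $k$, a $k$-path vertex cover ($k$-PVC) of $G$ is a set $S$ of vertices such that every path on $k$ vertices in $G$ contains at least one vertex of $S$ (if $G$ has no path on $k$ vertices, the empty set is a $k$-PVC). $\psi_k(G)$ denotes the minimum cardinality of a $k$-PVC of $G$. *)

(* Defs.v *)
From mathcomp Require Import all_boot.
Set Implicit Arguments. Unset Strict Implicit. Unset Printing Implicit Defensive.

Definition simple_graph (T : finType) (e : rel T) : Prop :=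
  symmetric e /\ irreflexive e.

Definition connected_graph (T : finType) (e : rel T) : Prop :=
  forall x y : T, connect e x y.

Definition is_kpath (T : finType) (e : rel T) (k : nat) (s : seq T) : bool :=
  [&& size s == k, uniq s &
      (if s is x :: p then path e x p else true)].

Definition is_kpvc (T : finType) (e : rel T) (k : nat) (S : {set T}) : bool :=
  [forall t : k.-tuple T, is_kpath e k t ==> has (mem S) t].

(* psi_k(G): minimum cardinality of a k-PVC (default #|T| is never
   strictly below the minimum since setT is a k-PVC for k >= 1). *)
Definition psi (T : finType) (e : rel T) (k : nat) : nat :=
  \big[minn/#|T|]_(S : {set T} | is_kpvc e k S) #|S|.

(* Main.v *)
Require Import Defs.
From mathcomp Require Import all_boot.
From mathcomp Require Import zify.
Set Implicit Arguments. Unset Strict Implicit. Unset Printing Implicit Defensive.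

Lemma bigmin_le (I : eqType) (r : seq I) (P : pred I) (F : I -> nat) x z :
  z \in r -> P z -> \big[minn/x]_(i <- r | P i) F i <= F z.
Proof.
elim: r => [|y r IH] //; rewrite inE big_cons => /orP [/eqP <- -> |Hz Pz].
  exact: geq_minl.
case: ifP => _; last exact: IH.
by rewrite geq_min IH ?orbT.
Qed.

Lemma psi_eq (T : finType) (e : rel T) k p :
  (exists S, is_kpvc e k S /\ #|S| = p) ->
  (forall S, is_kpvc e k S -> p <= #|S|) -> psi e k = p.
Proof.
move=> [S0 [HS0 <-]] Hlow; apply/eqP; rewrite eqn_leq; apply/andP; split.
  by rewrite /psi; apply: bigmin_le; rewrite ?mem_index_enum.
rewrite /psi; elim/big_ind: _ => //; first exact: max_card.
by move=> x y Hx Hy; rewrite leq_min Hx Hy.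
Qed.

Lemma kpvc_hit (T : finType) (e : rel T) k (S : {set T}) s :
  is_kpvc e k S -> size s = k -> uniq s -> sorted e s -> has (mem S) s.
Proof.
move=> /forallP H Hs Hu Hp.
have Hs' : size s == k by apply/eqP.
have := H (Tuple Hs') => /implyP; apply.
by rewrite /is_kpath /= Hs' Hu.
Qed.

Lemma kpvcP (T : finType) (e : rel T) k (S : {set T}) :
  (forall s, size s = k -> uniq s -> sorted e s -> {in s, forall v, v \notin S} -> False) ->
  is_kpvc e k S.
Proof.
move=> H; apply/forallP => t; apply/implyP => /and3P [/eqP Hs Hu Hp].
apply/negPn/negP => /hasPn Hh; apply: (H t) => //.
Qed.

Lemma path_cls (T : eqType) (e : rel T) (C : eqType) (cls : T -> C) x s :
  path e x s -> (forall u v, u \in x :: s -> v \in x :: s -> e u v -> cls u = cls v) ->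
  forall v, v \in x :: s -> cls v = cls x.
Proof.
elim: s x => [|y s IH] x /=.
  by move=> _ _ v; rewrite inE => /eqP ->.
move=> /andP [Hxy Hp] Hc v; rewrite inE => /orP [/eqP -> //|Hv].
have Hyx : cls x = cls y by apply: Hc => //; rewrite ?inE ?eqxx ?orbT.
rewrite Hyx; apply: IH => //.
by move=> u w Hu Hw; apply: Hc; rewrite inE ?Hu ?Hw orbT.
Qed.

Lemma clique_path (T : eqType) (e : rel T) x s :
  uniq (x :: s) -> (forall u v, u \in x :: s -> v \in x :: s -> u != v -> e u v) ->
  path e x s.
Proof.
elim: s x => [|y s IH] x //= /andP [Hx Hu] Hc.
apply/andP; split.
  apply: Hc; rewrite ?inE ?eqxx ?orbT //.
  by apply/eqP => Exy; move: Hx; rewrite Exy inE eqxx.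
by apply: IH => // u v Hu' Hv' Huv; apply: Hc => //; rewrite inE ?Hu' ?Hv' orbT.
Qed.

Lemma sorted_take_drop (T : eqType) (e : rel T) s n i :
  sorted e s -> sorted e (take n (drop i s)).
Proof.
move=> H.
have H1 : sorted e (drop i s).
  by move: H; rewrite -[s in sorted _ s](cat_take_drop i) => /cat_sorted2[].
move: H1; set d := drop i s.
by rewrite -[d in sorted _ d](cat_take_drop n) => /cat_sorted2[].
Qed.

Lemma window_count (T : eqType) (P : pred T) m s : 0 < m ->
  (forall i, size (take m (drop i s)) = m -> has P (take m (drop i s))) ->
  size s < m * (count P s).+1.
Proof.
move=> Hm.
suff HH : forall n s0, size s0 <= n ->
  (forall i, size (take m (drop i s0)) = m -> has P (take m (drop i s0))) ->
  size s0 < m * (count P s0).+1 by apply: HH.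
elim=> [|n IH] s0 Hs0 Hw.
  by move: Hs0; rewrite leqn0 => /eqP ->; rewrite muln_gt0 Hm.
case: (ltnP (size s0) m) => Hlt.
  by apply: (leq_trans Hlt); rewrite leq_pmulr.
have Ht : has P (take m s0).
  by have := Hw 0; rewrite drop0; apply; rewrite size_takel.
have Hc1 : 0 < count P (take m s0) by rewrite has_count in Ht.
have Hd : size (drop m s0) < m * (count P (drop m s0)).+1.
  apply: IH; first by rewrite size_drop; lia.
  by move=> i; rewrite drop_drop; apply: Hw.
rewrite -[s0 in size s0](cat_take_drop m) -[s0 in count _ s0](cat_take_drop m).
rewrite size_cat count_cat size_takel //.
nia.
Qed.
Section Graph.
Variables (a t' ne m1 : nat).

Definition V := ((('I_a + ('I_t'.+1 * 'I_m1)) + 'I_ne) + ('I_ne * 'I_m1))%type.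

Definition Hv (i : 'I_a) : V := inl (inl (inl i)).
Definition Fv f j : V := inl (inl (inr (f, j))).
Definition Xv g : V := inl (inr g).
Definition Yv g j : V := inr (g, j).

Definition adj (u v : V) : bool :=
 match u, v with
 | inl (inl (inl i)), inl (inl (inl j)) => i != j
 | inl (inl (inl _)), inl (inl (inr _)) => true
 | inl (inl (inr _)), inl (inl (inl _)) => true
 | inl (inl (inr (f,x))), inl (inl (inr (g,y))) => (f == g) && (x != y)
 | inl (inl (inl i)), inl (inr _) => val i == 0
 | inl (inr _), inl (inl (inl i)) => val i == 0
 | inl (inr g), inr (g', _) => g == g'
 | inr (g', _), inl (inr g) => g == g'
 | inr (g,x), inr (g',y) => (g == g') && (x != y)
 | _, _ => false
 end.

Lemma adj_sym : symmetric adj.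
Proof.
by case=> [[[i|[f x]]|g]|[g x]] [[[j|[f' y]]|g']|[g' y]] //=; rewrite eq_sym // [x == y]eq_sym.
Qed.

Lemma adj_irr : irreflexive adj.
Proof. by case=> [[[i|[f x]]|g]|[g x]] //=; rewrite !eqxx ?andbF. Qed.

Lemma adj_conn (Ha : 0 < a) : forall x y, connect adj x y.
Proof.
set h0 := Hv (Ordinal Ha).
have H0 : forall v, connect adj v h0.
  case=> [[[i|[f x]]|g]|[g x]].
  - case: (eqVneq (val i) 0) => Hi.
      by have -> : i = Ordinal Ha by apply: val_inj.
    by apply: connect1; rewrite /= /h0; apply/negP => /eqP E; rewrite E in Hi.
  - by apply: connect1.
  - by apply: connect1.
  - apply: (@connect_trans _ adj (Xv g)); apply: connect1 => //=.
move=> x y; apply: (connect_trans (H0 x)).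
by rewrite (sym_connect_sym adj_sym).
Qed.


Definition cls2 (v : V) : option ('I_t'.+1 + 'I_ne)%type :=
  match v with
  | inl (inl (inr (f, _))) => Some (inl f)
  | inr (g, _) => Some (inr g)
  | _ => None end.
Definition pcls (v : V) : option 'I_ne :=
  match v with
  | inl (inr g) => Some g
  | inr (g, _) => Some g
  | _ => None end.
Definition coord (v : V) : nat :=
  match v with
  | inl (inl (inl i)) => val i
  | inl (inl (inr (_, j))) => val j
  | inl (inr _) => m1
  | inr (_, j) => val j end.

Lemma class_size (C : eqType) (c : V -> option C) B (s : seq V) z :
  (forall u v, c u = Some z -> c v = Some z -> coord u = coord v -> u = v) ->
  (forall v, c v = Some z -> coord v < B) ->
  uniq s -> {in s, forall v, c v = Some z} -> size s <= B.
Proof.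
move=> Hinj Hb Hu Hs.
rewrite -(size_map coord) -(size_iota 0 B); apply: uniq_leq_size.
  by rewrite map_inj_in_uniq // => u v Hu' Hv'; apply: Hinj; apply: Hs.
by move=> n /mapP [v Hv ->]; rewrite mem_iota /= add0n; apply: Hb; apply: Hs.
Qed.

Lemma cls2_inj z u v : cls2 u = Some z -> cls2 v = Some z -> coord u = coord v -> u = v.
Proof.
case: u => [[[i|[f x]]|g]|[g x]] //; case: v => [[[j|[f' y]]|g']|[g' y]] //= H1 H2 Hc;
  rewrite -H2 in H1; (try discriminate); injection H1 as E; subst;
  by move/val_inj: Hc => ->.
Qed.

Lemma cls2_bound z v : cls2 v = Some z -> coord v < m1.
Proof. by case: v => [[[i|[f x]]|g]|[g x]] //= _; apply: ltn_ord. Qed.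

Lemma pcls_inj z u v : pcls u = Some z -> pcls v = Some z -> coord u = coord v -> u = v.
Proof.
case: u => [[[i|[f x]]|g]|[g x]] //; case: v => [[[j|[f' y]]|g']|[g' y]] //= H1 H2 Hc;
  rewrite -H2 in H1; injection H1 as E; subst.
- by [].
- by move: (ltn_ord y); rewrite -Hc ltnn.
- by move: (ltn_ord x); rewrite Hc ltnn.
- by move/val_inj: Hc => ->.
Qed.

Lemma pcls_bound z v : pcls v = Some z -> coord v < m1.+1.
Proof. by case: v => [[[i|[f x]]|g]|[g x]] //= _; rewrite ltnS // ltnW. Qed.

Definition emb (u : 'I_a + 'I_ne) : V :=
  match u with inl i => Hv i | inr g => Xv g end.

Lemma emb_inj : injective emb.
Proof. by case=> [i|g] [j|g'] //= [->]. Qed.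

Definition Sm : {set V} := emb @: [set: 'I_a + 'I_ne].

Lemma card_Sm : #|Sm| = a + ne.
Proof. by rewrite card_imset ?cardsT ?card_sum ?card_ord //; apply: emb_inj. Qed.

Lemma notSm v : v \notin Sm -> cls2 v != None.
Proof.
case: v => [[[i|[f x]]|g]|[g x]] //=.
- by move=> H; case/negP: H; apply/imsetP; exists (inl i).
- by move=> H; case/negP: H; apply/imsetP; exists (inr g).
Qed.

Lemma adj_cls2 u v : u \notin Sm -> v \notin Sm -> adj u v -> cls2 u = cls2 v.
Proof.
move=> /notSm Hu /notSm Hv.
case: u Hu => [[[i|[f x]]|g]|[g x]] //; case: v Hv => [[[j|[f' y]]|g']|[g' y]] //= _ _.
- by case/andP => /eqP ->.
- by case/andP => /eqP ->.
Qed.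

Lemma cover_m : is_kpvc adj m1.+1 Sm.
Proof.
apply: kpvcP => s Hs Hu Hso Hn.
case: s Hs Hu Hso Hn => [//|x r] Hs Hu Hso Hn.
have Hx : cls2 x != None by apply: notSm; apply: Hn; rewrite inE eqxx.
case Ez: (cls2 x) Hx => [z|//] _.
have Hall : {in x :: r, forall v, cls2 v = Some z}.
  move=> v Hv; rewrite -Ez; apply: (path_cls (cls := cls2) (Hso : path adj x r)) => //.
  by move=> u w Hu' Hw' Huw; apply: adj_cls2 => //; apply: Hn.
have := class_size (@cls2_inj z) (@cls2_bound z) Hu Hall.
by rewrite Hs ltnn.
Qed.

Definition isH (v : V) : bool := if v is inl (inl (inl _)) then true else false.

Section Sk.
Variables (pk : nat) (Hpk : pk <= a).

Definition Sk : {set V} := (fun i : 'I_pk => Hv (widen_ord Hpk i)) @: [set: 'I_pk].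

Lemma card_Sk : #|Sk| = pk.
Proof.
rewrite card_imset ?cardsT ?card_ord // => i j /= E; injection E as E'.
exact: val_inj.
Qed.

Lemma notSk i : Hv i \notin Sk -> pk <= i.
Proof.
rewrite leqNgt => H; apply/negP => Hi; case/negP: H.
by apply/imsetP; exists (Ordinal Hi) => //; congr Hv; apply: val_inj.
Qed.

Lemma adj_pcls u v : 0 < pk -> u \notin Sk -> v \notin Sk -> adj u v -> pcls u = pcls v.
Proof.
move=> H0.
case: u => [[[i|[f x]]|g]|[g x]]; case: v => [[[j|[f' y]]|g']|[g' y]] //=.
- by move=> /notSk Hi _ /eqP Ej; move: Hi; rewrite Ej leqn0 => /eqP Ep; rewrite Ep in H0.
- by move=> _ /notSk Hi /eqP Ej; move: Hi; rewrite Ej leqn0 => /eqP Ep; rewrite Ep in H0.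
- by move=> _ _ /eqP ->.
- by move=> _ _ /eqP ->.
- by move=> _ _ /andP [/eqP -> _].
Qed.

Lemma count_isH s : uniq s -> {in s, forall v, v \notin Sk} -> count isH s <= a - pk.
Proof.
move=> Hu Hn; rewrite -size_filter -(size_map coord) -(size_iota pk (a - pk)).
apply: uniq_leq_size.
  rewrite map_inj_in_uniq ?filter_uniq //.
  move=> u v; rewrite !mem_filter.
  case: u => [[[i|[f x]]|g]|[g x]] //; case: v => [[[j|[f' y]]|g']|[g' y]] //= _ _ E.
  by rewrite (val_inj E).
move=> n /mapP [v]; rewrite mem_filter => /andP [Hh Hv] ->.
case: v Hh Hv => [[[i|[f x]]|g]|[g x]] //= _ Hv.
rewrite mem_iota (notSk (Hn _ Hv)) /=.
have := ltn_ord i; lia.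
Qed.

Lemma adj_cls2F u v : ~~ isH u -> pcls u = None -> ~~ isH v -> pcls v = None ->
  adj u v -> cls2 u = cls2 v.
Proof.
case: u => [[[i|[f x]]|g]|[g x]] //; case: v => [[[j|[f' y]]|g']|[g' y]] //= _ _ _ _.
by case/andP => /eqP ->.
Qed.

Lemma cover_k k : 0 < pk -> m1.+1 < k -> m1.+1 * (a - pk).+1 <= k -> is_kpvc adj k Sk.
Proof.
move=> H0 Hmk Hk; apply: kpvcP => s Hs Hu Hso Hn.
case: s Hs Hu Hso Hn => [|x r] Hs Hu Hso Hn; first by rewrite -Hs in Hmk.
have Hc : forall v, v \in x :: r -> pcls v = pcls x.
  apply: (path_cls (cls := pcls) (Hso : path adj x r)) => //.
  by move=> u w Hu' Hw' Huw; apply: adj_pcls => //; apply: Hn.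
case Ep: (pcls x) Hc => [g|] Hc.
  have := class_size (@pcls_inj g) (@pcls_bound g) Hu Hc.
  by rewrite Hs leqNgt Hmk.
have := @window_count _ isH m1.+1 (x :: r) (ltn0Sn _).
have Hcnt := count_isH Hu Hn.
rewrite Hs; move=> HH.
suff : k < m1.+1 * (count isH (x :: r)).+1.
  move=> Hlt; have : m1.+1 * (count isH (x :: r)).+1 <= m1.+1 * (a - pk).+1.
    by rewrite leq_mul2l ltnS Hcnt orbT.
  lia.
apply: HH => i Hw.
set w := take m1.+1 (drop i (x :: r)) in Hw *.
apply/negPn/negP => /hasPn Hnh.
have Hmem : {subset w <= x :: r} by move=> v /mem_take /mem_drop.
have Hwu : uniq w by rewrite take_uniq // drop_uniq.
have Hws : sorted adj w by apply: sorted_take_drop.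
case Ew: w Hw Hwu Hws Hmem Hnh => [//|y w'] Hw Hwu Hws Hmem Hnh.
have HF : forall v, v \in y :: w' -> ~~ isH v /\ pcls v = None.
  by move=> v Hv; split; [apply: Hnh | apply: Hc; apply: Hmem].
have Hy : cls2 y != None.
  have [Hy1 Hy2] := HF y (mem_head _ _).
  by case: (y) Hy1 Hy2 => [[[i0|[f z]]|g]|[g z]].
case Ez: (cls2 y) Hy => [z|//] _.
have Hall : {in y :: w', forall v, cls2 v = Some z}.
  move=> v Hv; rewrite -Ez; apply: (path_cls (cls := cls2) (Hws : path adj y w')) => //.
  move=> u u' Hu1 Hu2 Huu; have [? ?] := HF u Hu1; have [? ?] := HF u' Hu2.
  exact: adj_cls2F.
have := class_size (@cls2_inj z) (@cls2_bound z) Hwu Hall.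
by rewrite Hw ltnn.
Qed.

End Sk.

Definition fragL f : seq V := [seq Fv f j | j <- enum 'I_m1].
Definition gadL g : seq V := [seq Yv g j | j <- enum 'I_m1].

Lemma mem_fragL f v : v \in fragL f -> exists j, v = Fv f j.
Proof. by case/mapP => j _ ->; exists j. Qed.

Lemma mem_gadL g v : v \in gadL g -> exists j, v = Yv g j.
Proof. by case/mapP => j _ ->; exists j. Qed.

Lemma Fv_in f j : Fv f j \in fragL f.
Proof. by apply/mapP; exists j; rewrite ?mem_enum. Qed.

Lemma uniq_fragL f : uniq (fragL f).
Proof. by rewrite map_inj_uniq ?enum_uniq // => j j' [->]. Qed.

Lemma uniq_gadL g : uniq (gadL g).
Proof. by rewrite map_inj_uniq ?enum_uniq // => j j' [->]. Qed.

Lemma size_fragL f : size (fragL f) = m1.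
Proof. by rewrite size_map size_enum_ord. Qed.

Lemma size_gadL g : size (gadL g) = m1.
Proof. by rewrite size_map size_enum_ord. Qed.

Lemma path_hub_frag i f : path adj (Hv i) (fragL f).
Proof.
apply: clique_path.
  by rewrite /= uniq_fragL andbT; apply/negP => /mem_fragL [j].
move=> u v; rewrite !inE => /orP [/eqP ->|/mem_fragL [j ->]] /orP [/eqP ->|/mem_fragL [j' ->]] //=.
all: rewrite ?eqxx //= => H; apply/negP => /eqP E; case/negP: H; by rewrite E.
Qed.

Lemma path_gad g : path adj (Xv g) (gadL g).
Proof.
apply: clique_path.
  by rewrite /= uniq_gadL andbT; apply/negP => /mem_gadL [j].
move=> u v; rewrite !inE => /orP [/eqP ->|/mem_gadL [j ->]] /orP [/eqP ->|/mem_gadL [j' ->]] //=.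
all: rewrite ?eqxx //= => H; apply/negP => /eqP E; case/negP: H; by rewrite E.
Qed.

Definition fidx (v : V) : 'I_t'.+1 :=
  if v is inl (inl (inr (f, _))) then f else ord0.

Definition Tc (S : {set V}) : {set 'I_t'.+1} := [set f | [exists j, Fv f j \in S]].

Lemma card_Tc (S : {set V}) : #|Tc S| <= #|S|.
Proof.
apply: (leq_trans _ (leq_imset_card fidx S)); apply: subset_leq_card.
apply/subsetP => f; rewrite inE => /existsP [j Hj].
by apply/imsetP; exists (Fv f j).
Qed.

Lemma untouched (S : {set V}) : #|S| < t'.+1 -> exists f, forall j, Fv f j \notin S.
Proof.
move=> Hlt; case: (pickP (fun f => f \notin Tc S)) => [f Hf | Hn].
  exists f => j; apply/negP => Hj; case/negP: Hf; rewrite inE; apply/existsP; by exists j.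
have : Tc S = setT by apply/setP => f; rewrite in_setT; apply/negbFE; exact: Hn f.
move=> E; have := card_Tc S; rewrite E cardsT card_ord; lia.
Qed.

Definition lab (v : V) : option ('I_a + 'I_ne)%type :=
  match v with
  | inl (inl (inl i)) => Some (inl i)
  | inl (inl (inr _)) => None
  | inl (inr g) => Some (inr g)
  | inr (g, _) => Some (inr g) end.

Lemma lower_m (S : {set V}) : a + ne <= t' -> is_kpvc adj m1.+1 S -> a + ne <= #|S|.
Proof.
move=> Ht HS; rewrite leqNgt; apply/negP => Hlt.
pose U := [set u : ('I_a + 'I_ne)%type | match u with inl i => Hv i \in S
   | inr g => (Xv g \in S) || [exists j, Yv g j \in S] end].
have HU : #|U| <= #|S|.
  rewrite -(card_imset U (@Some_inj _)).
  apply: (leq_trans _ (leq_imset_card lab S)); apply: subset_leq_card.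
  apply/subsetP => o /imsetP [u]; rewrite inE => Hu ->.
  case: u Hu => [i Hi|g /orP [Hg|/existsP [j Hj]]].
  - by apply/imsetP; exists (Hv i).
  - by apply/imsetP; exists (Xv g).
  - by apply/imsetP; exists (Yv g j).
case: (pickP (fun u => u \notin U)) => [u Hu | Hn]; last first.
  have : U = setT by apply/setP => u; rewrite in_setT; apply/negbFE; exact: Hn u.
  by move=> E; move: HU; rewrite E cardsT card_sum !card_ord; lia.
move: Hu; rewrite inE; case: u => [i|g] Hu.
- have [f Hf] := untouched (leq_trans Hlt (leq_trans Ht (leqnSn _))).
  have := kpvc_hit HS (s := Hv i :: fragL f).
  rewrite /= size_fragL uniq_fragL path_hub_frag andbT.
  have -> : Hv i \notin fragL f by apply/negP => /mem_fragL [j].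
  move=> /(_ erefl erefl isT) /orP [H|/hasP [v /mem_fragL [j ->]]].
    by rewrite H in Hu.
  by rewrite /= (negbTE (Hf j)).
- move: Hu; rewrite negb_or => /andP [HX /existsPn HY].
  have := kpvc_hit HS (s := Xv g :: gadL g).
  rewrite /= size_gadL uniq_gadL path_gad andbT.
  have -> : Xv g \notin gadL g by apply/negP => /mem_gadL [j].
  move=> /(_ erefl erefl isT) /orP [H|/hasP [v /mem_gadL [j ->]]].
    by rewrite H in HX.
  by rewrite /= (negbTE (HY j)).
Qed.

Fixpoint build (f : 'I_t'.+1) (p : seq ('I_a * 'I_t'.+1)) : seq V :=
  fragL f ++ (match p with [::] => [::] | (h, g) :: r => Hv h :: build g r end).

Lemma size_build f p : size (build f p) = m1 + size p * m1.+1.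
Proof.
elim: p f => [|[h g] r IH] f /=; first by rewrite cats0 size_fragL addn0.
rewrite size_cat size_fragL /= IH; lia.
Qed.

Lemma mem_build f p v : v \in build f p ->
  (exists h, v = Hv h /\ h \in unzip1 p) \/ (exists g j, v = Fv g j /\ g \in f :: unzip2 p).
Proof.
elim: p f => [|[h g] r IH] f /=.
  by rewrite cats0 => /mem_fragL [j ->]; right; exists f, j; rewrite inE eqxx.
rewrite mem_cat => /orP [/mem_fragL [j ->]|]; first by right; exists f, j; rewrite inE eqxx.
rewrite inE => /orP [/eqP ->|/IH [[h' [-> Hh']]|[g' [j [-> Hg']]]]].
- by left; exists h; rewrite inE eqxx.
- by left; exists h'; rewrite inE Hh' orbT.
- by right; exists g', j; rewrite inE Hg' orbT.
Qed.

Lemma uniq_build p f : uniq (unzip1 p) -> uniq (f :: unzip2 p) -> uniq (build f p).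
Proof.
elim: p f => [|[h g] r IH] f /=; first by rewrite cats0 uniq_fragL.
move=> /andP [Hh Hu1] /andP [Hf Hu2].
rewrite cat_uniq uniq_fragL /=.
have Hhb : Hv h \notin build g r.
  apply/negP => /mem_build [[h' [[E] Hh']]|[g' [j [E _]]]] //.
  by move: Hh; rewrite E Hh'.
rewrite Hhb IH // andbT negb_or.
have -> : Hv h \notin fragL f by apply/negP => /mem_fragL [j].
rewrite andbT /=; apply/hasPn => v /mem_build [[h' [-> _]]|[g' [j' [-> Hg']]]].
  by apply/negP => /mem_fragL [j].
apply/negP => /mem_fragL [j [E1 _]].
by move: Hf; rewrite -E1 Hg'.
Qed.

Lemma path_H_build p h g : h \notin unzip1 p -> uniq (unzip1 p) -> path adj (Hv h) (build g p).
Proof.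
elim: p h g => [|[h' g'] r IH] h g /=.
  by rewrite cats0 => _ _; apply: path_hub_frag.
rewrite inE negb_or => /andP [Hhh' Hh] /andP [Hh' Hu].
rewrite cat_path path_hub_frag /= IH // andbT.
by case/orP: (mem_last (Hv h) (fragL g)) => [/eqP ->|/mem_fragL [j ->]] //=.
Qed.

Lemma sorted_build p f : uniq (unzip1 p) -> sorted adj (build f p).
Proof.
case: p => [|[h g] r] /=.
  move=> _; rewrite cats0; case Ef: (fragL f) => [|y ys] //=.
  apply: clique_path; first by rewrite -Ef uniq_fragL.
  rewrite -Ef => u v /mem_fragL [x ->] /mem_fragL [x' ->] /= H; rewrite eqxx /=.
  by apply/negP => /eqP E; case/negP: H; rewrite E.
move=> /andP [Hh Hu].
case Ef: (fragL f) => [|y ys] /=; first exact: path_H_build.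
rewrite cat_path /= path_H_build // andbT.
have Hfy : path adj y ys.
  apply: clique_path; first by rewrite -Ef uniq_fragL.
  rewrite -Ef => u v /mem_fragL [x ->] /mem_fragL [x' ->] /= H; rewrite eqxx /=.
  by apply/negP => /eqP E; case/negP: H; rewrite E.
rewrite Hfy /=.
have : last y ys \in fragL f by rewrite Ef mem_last.
by case/mem_fragL => j ->.
Qed.

Lemma Hv_inj : injective Hv.
Proof. by move=> i j [->]. Qed.

Lemma lower_k pk k (S : {set V}) : pk <= a -> a <= t' -> 0 < pk ->
  k <= m1 + (a - pk).+1 * m1.+1 -> is_kpvc adj k S -> pk <= #|S|.
Proof.
move=> Hpk Hat H0 Hk HS; rewrite leqNgt; apply/negP => Hlt.
set q := (a - pk).+1.
pose A := [set i : 'I_a | Hv i \in S].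
have HA : #|A| <= #|S|.
  rewrite -(card_imset A Hv_inj); apply: subset_leq_card; apply/subsetP => v.
  by case/imsetP => i; rewrite inE => Hi ->.
have HAc := cardsC A; rewrite card_ord in HAc.
have HTc := cardsC (Tc S); rewrite card_ord in HTc.
have HT := card_Tc S.
have Hhs : q <= size (enum (~: A)) by rewrite -cardE; lia.
have Hfs : q.+1 <= size (enum (~: Tc S)) by rewrite -cardE; lia.
have Hhs_mem : forall i, i \in enum (~: A) -> Hv i \notin S.
  by move=> i; rewrite mem_enum !inE.
have Hfs_mem : forall f j, f \in enum (~: Tc S) -> Fv f j \notin S.
  move=> f j; rewrite mem_enum !inE => /existsPn H; exact: H.
have Hfsu := enum_uniq (~: Tc S).
have Hhsu := enum_uniq (~: A).
case Efs: (enum (~: Tc S)) Hfs Hfs_mem Hfsu => [//|f0 fs1] Hfs Hfs_mem Hfsu.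
set hs' := take q (enum (~: A)).
set fs' := take q fs1.
have Hsh : size hs' = q by rewrite size_takel.
have Hsf : size fs' = q by rewrite size_takel //; move: Hfs => /=; rewrite ltnS.
set p := zip hs' fs'.
have Hp1 : unzip1 p = hs' by rewrite unzip1_zip // Hsh Hsf.
have Hp2 : unzip2 p = fs' by rewrite unzip2_zip // Hsh Hsf.
have Hsp : size p = q by rewrite size_zip Hsh Hsf minnn.
have Hu1 : uniq (unzip1 p) by rewrite Hp1 take_uniq.
have Hu2 : uniq (f0 :: unzip2 p).
  move: Hfsu => /= /andP [Hf0 Hu]; rewrite Hp2 take_uniq // andbT.
  by apply/negP => /mem_take H; rewrite H in Hf0.
set s := build f0 p.
have Hss : k <= size s by rewrite size_build Hsp.
have := kpvc_hit HS (s := take k s).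
rewrite size_takel // take_uniq ?uniq_build //.
have -> : sorted adj (take k s).
  by have := sorted_take_drop k 0 (sorted_build f0 Hu1); rewrite drop0.
move=> /(_ erefl erefl isT) /hasP [v /mem_take /mem_build H].
case: H => [[h [-> Hh]]|[g [j [-> Hg]]]].
- by rewrite Hp1 in Hh; move: (Hhs_mem _ (mem_take Hh)) => /negP.
- rewrite Hp2 in Hg; have Hg' : g \in f0 :: fs1.
    by move: Hg; rewrite !inE => /orP [->|/mem_take ->] //; rewrite orbT.
  by move: (Hfs_mem g j Hg') => /negP.
Qed.

End Graph.
Theorem mainTheorem6 (k m pk pm : nat) :
  0 < k -> 1 <= m -> m < k -> 0 < pk ->
  pk + k %/ m - 1 <= pm ->
  exists (T : finType) (e : rel T),
    [/\ 0 < #|T|, simple_graph e, connected_graph e,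
        psi e k = pk & psi e m = pm].
Proof.
move=> Hk0 Hm1 Hmk Hpk0 Hpm.
have Hq1 : 0 < k %/ m by rewrite divn_gt0 // ltnW.
have Hqm : k %/ m * m <= k by apply: leq_trunc_div.
have Hk2 : k < k %/ m * m + m.
  by rewrite {1}(divn_eq k m) ltn_add2l ltn_pmod.
set q := k %/ m in Hq1 Hqm Hk2 Hpm.
set a := pk + q - 1.
set ne := pm - a.
case Em: m Hm1 Hmk Hqm Hk2 => [//|m1] _ Hmk Hqm Hk2.
have Ha : 0 < a by rewrite /a; lia.
have Hpka : pk <= a by rewrite /a; lia.
exists (V a (a + ne) ne m1), (@adj a (a + ne) ne m1).
split.
- by apply/card_gt0P; exists (Hv (a + ne) ne m1 (Ordinal Ha)).
- by split; [apply: adj_sym | apply: adj_irr].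
- exact: adj_conn.
- apply: psi_eq.
    exists (Sk (a + ne) ne m1 Hpka); split; last exact: card_Sk.
    apply: cover_k => //.
    have -> : (a - pk).+1 = q by rewrite /a; lia.
    by rewrite mulnC.
  move=> S HS; apply: (lower_k (t' := a + ne) (ne := ne) (m1 := m1) (pk := pk) (k := k)) => //.
    by apply: leq_addr.
  have -> : (a - pk).+1 = q by rewrite /a; lia.
  lia.
- apply: psi_eq.
    exists (Sm a (a + ne) ne m1); split; first exact: cover_m.
    by rewrite card_Sm /ne /a; lia.
  move=> S HS; have := lower_m (leqnn _) HS.
  by rewrite /ne /a; lia.
Qed.
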